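(* Let $g,h\in\mathbb F_q[x,y]$ be nonzero with $(x^l-1)(y^m-1)=g(x,y)h(x,y)$ in $\mathbb F_q[x,y]$, and let $C=\langle g\rangle$, $C^*=\langle h^*\rangle$ be the ideals of $\mathfrak R$ generated by the images of $g$ and $h^*$. Assume $C\neq\{0\}$ and $C^*\ne\{0\}$. Then $C^*\subseteq C$ if and only if $g(x,y)g^*(x,y)$ divides $(x^l-1)(y^m-1)$ in $\mathbb F_q[x,y]$.
   Context: $\mathfrak R=\mathbb F_q[x,y]/\langle x^l-1,y^m-1\rangle$. For nonzero $f\in\mathbb F_q[x,y]$ with $l_1=\deg_x f$, $l_2=\deg_y f$, the reciprocal polynomial is $f^*(x,y)=x^{l_1}y^{l_2}f(x^{-1},y^{-1})$. *)

(* Defs.v *)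
From HB Require Import structures.
From mathcomp Require Import all_boot all_order all_algebra.
Set Implicit Arguments. Unset Strict Implicit. Unset Printing Implicit Defensive.
Import GRing.Theory.
Local Open Scope ring_scope.

(* Bivariate polynomials F[x,y] are represented as {poly {poly F}}:
   the outer variable is y, the inner variable is x. *)
Notation bipoly F := {poly {poly F}}.

Definition varX (F : fieldType) : bipoly F := ('X)%:P.
Definition varY (F : fieldType) : bipoly F := 'X.

Definition degY (F : fieldType) (f : bipoly F) : nat := (size f).-1.
Definition degX (F : fieldType) (f : bipoly F) : nat :=
  (\max_(j < size f) (size (nth 0%R f j)).-1)%N.

Definition bicoef (F : fieldType) (f : bipoly F) (i j : nat) : F := f`_j`_i.

(* Reciprocal polynomial f^*(x,y) = x^{deg_x f} y^{deg_y f} f(1/x,1/y):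
   the coefficient of x^i y^j in f^* is that of x^(l1-i) y^(l2-j) in f. *)
Definition recip (F : fieldType) (f : bipoly F) : bipoly F :=
  \poly_(j < (degY f).+1) \poly_(i < (degX f).+1)
     bicoef f (degX f - i) (degY f - j).

Definition xl1 (F : fieldType) (l : nat) : bipoly F := varX F ^+ l - 1.
Definition ym1 (F : fieldType) (m : nat) : bipoly F := varY F ^+ m - 1.

(* f1 and f2 have the same image in R = F[x,y]/<x^l-1, y^m-1>. *)
Definition congR (F : fieldType) (l m : nat) (f1 f2 : bipoly F) : Prop :=
  exists b c : bipoly F, f1 - f2 = b * xl1 F l + c * ym1 F m.

Definition inIdealR (F : fieldType) (l m : nat) (g f : bipoly F) : Prop :=
  exists a : bipoly F, congR l m f (a * g).

Definition idealR_nonzero (F : fieldType) (l m : nat) (g : bipoly F) : Prop :=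
  exists f : bipoly F, inIdealR l m g f /\ ~ congR l m f 0.

Definition idealR_sub (F : fieldType) (l m : nat) (h g : bipoly F) : Prop :=
  forall f : bipoly F, inIdealR l m h f -> inIdealR l m g f.

Definition bidvd (F : fieldType) (a b : bipoly F) : Prop :=
  exists k : bipoly F, b = k * a.

(* Main.v *)
Require Import Defs.
From HB Require Import structures.
From mathcomp Require Import all_boot all_order all_algebra.
From mathcomp Require Import zify ring.
From Stdlib Require Import Classical.
Set Implicit Arguments. Unset Strict Implicit. Unset Printing Implicit Defensive.
Import GRing.Theory.
Local Open Scope ring_scope.

Section Aux.
Variable F : fieldType.

Definition rvp (n : nat) (p : {poly F}) : {poly F} := \poly_(k < n.+1) p`_(n - k).

Lemma rvpD n p q : rvp n (p + q) = rvp n p + rvp n q.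
Proof. by apply/polyP => i; rewrite !(coefD, coef_poly); case: ifP; rewrite ?addr0. Qed.

Lemma rvpZ n a p : rvp n (a *: p) = a *: rvp n p.
Proof. by apply/polyP => i; rewrite !(coefZ, coef_poly); case: ifP; rewrite ?mulr0. Qed.

Lemma rvp0 n : rvp n 0 = 0.
Proof. by apply/polyP => i; rewrite !(coef0, coef_poly); case: ifP. Qed.

Lemma rvp_sum n k (f : 'I_k -> {poly F}) :
  rvp n (\sum_(i < k) f i) = \sum_(i < k) rvp n (f i).
Proof. by apply: (big_morph _ (@rvpD n) (rvp0 n)). Qed.

Lemma rvpX n i : (i <= n)%N -> rvp n 'X^i = 'X^(n - i).
Proof.
move=> lein; apply/polyP => k; rewrite coef_poly !coefXn.
case: ifP => kn.
  by have -> : (n - k == i)%N = (k == n - i)%N by apply/eqP/eqP; lia.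
by case: eqP => // e; exfalso; move/negbT: kn; rewrite -leqNgt; lia.
Qed.

Lemma poly_wide (p : {poly F}) n : (size p <= n)%N ->
  p = \sum_(i < n) p`_i *: 'X^i.
Proof.
move=> sp; rewrite -poly_def; apply/polyP => i; rewrite coef_poly.
by case: ifP => // /negbT; rewrite -leqNgt => /(leq_trans sp) /leq_sizeP ->.
Qed.

Lemma rvpM_gen m n (al be : nat -> F) :
  rvp (m + n) ((\sum_(i < m.+1) al i *: 'X^i) * (\sum_(j < n.+1) be j *: 'X^j)) =
  rvp m (\sum_(i < m.+1) al i *: 'X^i) * rvp n (\sum_(j < n.+1) be j *: 'X^j).
Proof.
rewrite !rvp_sum !big_distrl rvp_sum; apply: eq_bigr => i _.
rewrite !big_distrr rvp_sum; apply: eq_bigr => j _ /=.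
rewrite -scalerAl -scalerAr scalerA -exprD rvpZ rvpX; last by have := ltn_ord i; have := ltn_ord j; lia.
rewrite !rvpZ rvpX; last by have := ltn_ord i; lia.
rewrite rvpX; last by have := ltn_ord j; lia.
rewrite -scalerAl -scalerAr scalerA -exprD; congr (_ *: 'X^_).
by have := ltn_ord i; have := ltn_ord j; lia.
Qed.

Lemma rvpM m n (a c : {poly F}) : (size a <= m.+1)%N -> (size c <= n.+1)%N ->
  rvp (m + n) (a * c) = rvp m a * rvp n c.
Proof.
move=> sa sc; have := rvpM_gen m n (fun i => a`_i) (fun j => c`_j).
by rewrite -!poly_wide.
Qed.


Lemma irr_exists n (p : {poly F}) : (size p <= n)%N -> (1 < size p)%N ->
  exists r, r %| p /\ irreducible_poly r.
Proof.
elim: n p => [|n IH] p sp sp1; first by lia.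
case: (classic (irreducible_poly p)) => [irr|nirr].
  by exists p; split.
have [q Hq] : exists q : {poly F}, ~ (size q != 1%N -> q %| p -> q %= p).
  apply: not_all_ex_not => H; apply: nirr; split => //.
have sq1 : size q != 1%N by apply: NNPP => H; apply: Hq => x; case: (H x).
have qp : q %| p by apply: NNPP => H; apply: Hq => _ x; case: (H x).
have nqp : ~~ (q %= p) by apply/negP => H; apply: Hq.
have p0 : p != 0 by rewrite -size_poly_gt0; lia.
have q0 : q != 0 by apply: contraNneq p0 => q0; move: qp; rewrite q0 dvd0p.
have sqp : (size q < size p)%N.
  rewrite ltn_neqAle dvdp_leq // andbT; by rewrite dvdp_size_eqp.
have [r [rq irr]] := IH q ltac:(lia) ltac:(by move: sq1; rewrite -size_poly_gt0 in q0; lia).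
by exists r; split => //; apply: dvdp_trans rq qp.
Qed.

Lemma irr_prime (r u v : {poly F}) : irreducible_poly r -> r %| u * v ->
  r %| u \/ r %| v.
Proof.
move=> irr; have [ru|nru] := boolP (r %| u); first by left.
rewrite mulrC Gauss_dvdpl; first by right.
by rewrite irreducible_poly_coprime.
Qed.


Local Notation bp := {poly {poly F}}.

Lemma cdiv_ex (r : {poly F}) (G : bp) : (forall j, r %| G`_j) ->
  G = r%:P * \poly_(j < size G) (G`_j %/ r).
Proof.
move=> H; apply/polyP => j; rewrite coefCM coef_poly; case: ifP => js.
  by rewrite mulrC divpK.
by move/negbT: js; rewrite -leqNgt => /leq_sizeP ->; rewrite ?div0p ?mulr0.
Qed.

Lemma prime_bi (r : {poly F}) (G H : bp) : irreducible_poly r ->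
  (forall j, r %| (G * H)`_j) -> (forall j, r %| G`_j) \/ (forall j, r %| H`_j).
Proof.
move=> irr dGH; have r0 := irredp_neq0 irr.
pose md := fun u : {poly F} => u %% r.
pose dv := fun u : {poly F} => u %/ r.
have md0 : md 0 = 0 by rewrite /md mod0p.
have dv0 : dv 0 = 0 by rewrite /dv div0p.
pose G' := map_poly md G; pose G2 := map_poly dv G.
pose H' := map_poly md H; pose H2 := map_poly dv H.
have EG : G = G' + r%:P * G2.
  by apply/polyP => j; rewrite coefD coefCM !coef_map_id0 // /md /dv mulrC addrC -divp_eq.
have EH : H = H' + r%:P * H2.
  by apply/polyP => j; rewrite coefD coefCM !coef_map_id0 // /md /dv mulrC addrC -divp_eq.
have dGH' : forall j, r %| (G' * H')`_j.
  move=> j; have := dGH j.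
  have -> : G * H = G' * H' + r%:P * (G2 * H' + G' * H2 + r%:P * G2 * H2).
    by rewrite {1}EG {1}EH; ring.
  by rewrite coefD coefCM dvdp_addl // dvdp_mulr.
have key : forall (K : bp) j, r %| (map_poly md K)`_j -> (map_poly md K)`_j = 0.
  move=> K j; rewrite coef_map_id0 // /md => d; apply/eqP; apply: contraT => ne.
  by have := dvdp_leq ne d; rewrite leqNgt ltn_modp r0.
have modz : forall (K : bp), map_poly md K = 0 -> forall j, r %| K`_j.
  move=> K HK j; move: (congr1 (fun P : bp => P`_j) HK) => /=.
  by rewrite coef_map_id0 // coef0 /md => /modp_eq0P.
have [G'0|G'n0] := eqVneq G' 0; first by left; apply: modz.
have [H'0|H'n0] := eqVneq H' 0; first by right; apply: modz.
exfalso.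
have := dGH' (size (G' * H')).-1; rewrite -/(lead_coef _) lead_coefM.
case/irr_prime => // d.
  by move: (key G _ d) => /eqP; rewrite lead_coef_eq0 (negPf G'n0).
by move: (key H _ d) => /eqP; rewrite lead_coef_eq0 (negPf H'n0).
Qed.


Lemma structure n (r D : {poly F}) (g h : bp) : (size r <= n)%N -> r != 0 -> D != 0 ->
  g * h = r%:P * D^:P -> exists a b : {poly F}, g = a%:P * b^:P.
Proof.
elim: n r g h => [|n IH] r g h sr r0 D0 E.
  by move: r0; rewrite -size_poly_gt0; lia.
have RHS0 : r%:P * D^:P != 0 :> bp.
  by rewrite mulf_neq0 // ?polyC_eq0 // map_poly_eq0.
have g0 : g != 0 by apply: contraNneq RHS0 => g0; rewrite -E g0 mul0r.
have h0 : h != 0 by apply: contraNneq RHS0 => h0; rewrite -E h0 mulr0.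
have [sr1|sr1] := leqP (size r) 1.
  have E' := congr1 swapXY E; rewrite !rmorphM /= swapXY_polyC swapXY_map_polyC in E'.
  have := congr1 (fun P : bp => size P) E'; rewrite /= !size_mul ?swapXY_eq0 ?polyC_eq0 ?map_poly_eq0 //.
  rewrite size_polyC D0 size_map_polyC addn1 /= => Es.
  have sg : (size (swapXY g) <= 1)%N.
    have H : (0 < size (swapXY h))%N by rewrite size_poly_gt0 swapXY_eq0.
    rewrite -subn1 in Es; move: Es H sr1; move: (size (swapXY g)) (size (swapXY h)) (size r) => x y z. lia.
  exists 1, (swapXY g)`_0; rewrite polyC1 mul1r -swapXY_polyC.
  by rewrite -(size1_polyC sg) swapXYK.
have [p [pr irr]] := irr_exists (leqnn (size r)) sr1.
have p0 := irredp_neq0 irr.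
have Er : r = (r %/ p) * p by rewrite divpK.
set r' := r %/ p in Er; clearbody r'.
have r'0 : r' != 0 by apply: contraNneq r0 => e; rewrite Er e mul0r.
have sr' : (size r' <= n)%N.
  have := size_mul r'0 p0; rewrite -Er -subn1.
  have sp1 := irr.1; move: (size_poly_gt0 r') sr sp1; rewrite r'0 /=; move: (size r) (size r') (size p) => x y z. lia.
have dv : forall j, p %| (g * h)`_j.
  by move=> j; rewrite E coefCM Er dvdp_mulr // dvdp_mull.
have E2 : forall (X : bp), p%:P * X = r%:P * D^:P -> X = r'%:P * D^:P.
  move=> X EX; apply: (mulfI (x := p%:P)); first by rewrite polyC_eq0.
  by rewrite EX Er polyCM; ring.
case: (prime_bi irr dv) => /cdiv_ex Eg.
  set g1 := \poly_(_ < _) _ in Eg.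
  have [a [b Eab]] := IH r' g1 h sr' r'0 D0 (E2 (g1 * h) ltac:(by rewrite mulrA -Eg)).
  by exists (p * a), b; rewrite Eg Eab polyCM mulrA.
set h1 := \poly_(_ < _) _ in Eg.
apply: (IH r' g h1 sr' r'0 D0); apply: E2.
by rewrite mulrCA -Eg.
Qed.


Lemma coefAB (A B : {poly F}) j : (A%:P * B^:P : bp)`_j = A * (B`_j)%:P.
Proof. by rewrite coefCM coef_map. Qed.

Lemma compare (A B C D : {poly F}) : A != 0 -> B != 0 -> C != 0 ->
  A%:P * B^:P = C%:P * D^:P :> bp ->
  exists lam : F, lam != 0 /\ A = lam *: C /\ D = lam *: B.
Proof.
move=> A0 B0 C0 E.
have Ej : forall j, A * (B`_j)%:P = C * (D`_j)%:P.
  by move=> j; rewrite -!coefAB E.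
pose be := lead_coef B; pose de := D`_(size B).-1.
have be0 : be != 0 by rewrite lead_coef_eq0.
have E0 := Ej (size B).-1; rewrite -/(lead_coef B) -/be -/de in E0.
have de0 : de != 0.
  apply/eqP => d0; move: E0; rewrite d0 mulr0 => /eqP.
  by rewrite mulf_eq0 polyC_eq0 (negPf A0) (negPf be0).
have EA : A = (de / be) *: C.
  have -> : A = A * be%:P * (be^-1)%:P by rewrite -mulrA -polyCM mulfV // mulr1.
  by rewrite E0 -mulrA -polyCM mulrC mul_polyC.
exists (de / be); split; first by rewrite mulf_neq0 ?invr_eq0.
split => //; apply/polyP => j; rewrite coefZ.
have : C * ((de / be) * B`_j)%:P = C * (D`_j)%:P.
  by rewrite -Ej EA polyCM -mul_polyC; ring.
by move/(mulfI C0)/polyC_inj.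
Qed.


Lemma size_AB (a b : {poly F}) : a != 0 -> size (a%:P * b^:P : bp) = size b.
Proof.
move=> a0; have [->|b0] := eqVneq b 0; first by rewrite map_poly0 mulr0 !size_poly0.
rewrite size_mul ?polyC_eq0 ?map_poly_eq0 // size_polyC a0 size_map_polyC.
by rewrite add1n.
Qed.

Lemma degX_AB (a b : {poly F}) : a != 0 -> b != 0 ->
  degX (a%:P * b^:P) = (size a).-1.
Proof.
move=> a0 b0; rewrite /degX size_AB //.
have sz : forall j, size ((a%:P * b^:P : bp)`_j) = if b`_j == 0 then 0%N else size a.
  move=> j; rewrite coefAB; case: eqP => [->|/eqP bj]; first by rewrite mulr0 size_poly0.
  by rewrite mulrC mul_polyC size_scale.
apply/eqP; rewrite eqn_leq; apply/andP; split.
  apply/bigmax_leqP => i _; rewrite sz; case: eqP => //.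
have sb : ((size b).-1 < size b)%N by rewrite prednK // size_poly_gt0.
apply: (bigmax_sup (Ordinal sb)) => //=.
by rewrite /= sz -/(lead_coef b) lead_coef_eq0 (negPf b0).
Qed.

Lemma recipE (a b : {poly F}) : a != 0 -> b != 0 ->
  recip (a%:P * b^:P) = (rvp (size a).-1 a)%:P * (rvp (size b).-1 b)^:P.
Proof.
move=> a0 b0; rewrite /recip degX_AB // /degY size_AB //.
apply/polyP => j; rewrite coef_poly coefAB [(rvp _ b)`_j]coef_poly.
case: ifP => jb; last by rewrite mulr0.
apply/polyP => i; rewrite coef_poly coefMC coef_poly /bicoef coefAB coefMC.
by case: ifP => //; rewrite mul0r.
Qed.


Lemma key (A c ds q : {poly F}) (Z ga : bp) : q \is monic -> ds %% q != 0 ->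
  c%:P * ds^:P = A%:P * Z + ga * q^:P -> A %| c.
Proof.
move=> qm t0 E.
have q0 : q != 0 by apply: contraTneq qm => ->; rewrite monicE lead_coef0 eq_sym oner_eq0.
set t := ds %% q in t0.
have Eds : ds = ds %/ q * q + t by rewrite /t -divp_eq.
have Qm : q^:P \is monic := monic_map _ qm.
have Q0 : q^:P != 0 :> bp by rewrite map_poly_eq0.
have EZ := Pdiv.RingMonic.rdivp_eq Qm Z.
set Z1 := Pdiv.CommonRing.rdivp Z _ in EZ; set Z0 := Pdiv.CommonRing.rmodp Z _ in EZ.
have sZ0 : (size Z0 < size q)%N.
  by rewrite -(size_map_polyC q); apply: Pdiv.CommonRing.ltn_rmodpN0.
have st : (size t < size q)%N by rewrite ltn_modp.
pose W := ga + A%:P * Z1 - c%:P * (ds %/ q)^:P.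
have EW : c%:P * t^:P - A%:P * Z0 = W * q^:P.
  move: E; rewrite {1}Eds EZ rmorphD rmorphM /= /W => E.
  apply: (addrI (c%:P * ((ds %/ q)^:P * q^:P) + A%:P * Z0)).
  rewrite [LHS](_ : _ = c%:P * ((ds %/ q)^:P * q^:P + t^:P)); last by ring.
  by rewrite E; ring.
have W0 : W = 0.
  have [//|W0] := eqVneq W 0; exfalso.
  have := congr1 (fun P : bp => size P) EW => /=; rewrite size_Mmonic // size_map_polyC.
  have sW : (0 < size W)%N by rewrite size_poly_gt0.
  have s1 := size_polyD (c%:P * t^:P) (- (A%:P * Z0)); rewrite size_opp in s1.
  have s2 := size_polyMleq (c%:P) (t^:P); rewrite size_map_polyC in s2.
  have s3 := size_polyMleq (A%:P : bp) Z0.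
  have s4 := size_polyC_leq1 c; have s5 := size_polyC_leq1 A.
  move=> Es; move: Es s1 s2 s3 s4 s5 sW st sZ0.
  move: (size (c%:P * t^:P - A%:P * Z0)) (size (c%:P * t^:P)) (size (A%:P * Z0)) (size W) (size q) (size t) (size Z0) (size (c%:P : bp)) (size (A%:P : bp)).
  move=> ? ? ? ? ? ? ? ? ?; rewrite -!subn1; lia.
move: EW; rewrite W0 mul0r => /eqP; rewrite subr_eq0 => /eqP EW.
have := congr1 (fun P : bp => P`_(size t).-1) EW => /=; rewrite coefAB coefCM.
rewrite -/(lead_coef t) => Ec.
have lt0 : lead_coef t != 0 by rewrite lead_coef_eq0.
have -> : c = c * (lead_coef t)%:P * ((lead_coef t)^-1)%:P.
  by rewrite -mulrA -polyCM mulfV // mulr1.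
by rewrite Ec dvdp_mulr // dvdp_mulr.
Qed.


Lemma rvp_pm l : (0 < l)%N -> rvp l ('X^l - 1) = - ('X^l - 1).
Proof.
move=> l0; rewrite rvpD -scaleN1r rvpZ scaleN1r.
have -> : (1 : {poly F}) = 'X^0 by rewrite expr0.
rewrite rvpX // rvpX //.
by rewrite subnn subn0 expr0 scaleN1r opprB addrC.
Qed.

Theorem main_gen (l m : nat) (g h : bp) :
  g != 0 -> h != 0 ->
  xl1 F l * ym1 F m = g * h ->
  idealR_nonzero l m (recip h) ->
  (idealR_sub l m (recip h) g <-> bidvd (g * recip g) (xl1 F l * ym1 F m)).
Proof.
move=> g0 h0 E0 NZ.
pose p : {poly F} := 'X^l - 1; pose q : {poly F} := 'X^m - 1.
have EP : xl1 F l = p%:P by rewrite /xl1 /varX /p rmorphB /= rmorphXn rmorph1.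
have EQ : ym1 F m = q^:P by rewrite /ym1 /varY /q rmorphB /= map_polyXn rmorph1.
have M0 : xl1 F l * ym1 F m != 0 by rewrite E0 mulf_neq0.
have l0 : (0 < l)%N.
  by rewrite lt0n; apply: contraNneq M0 => e0; rewrite /xl1 e0 expr0 subrr mul0r.
have m0 : (0 < m)%N.
  by rewrite lt0n; apply: contraNneq M0 => e0; rewrite /ym1 e0 expr0 subrr mulr0.
have pm : p \is monic by apply: monic_Xn_sub_1.
have qm : q \is monic by apply: monic_Xn_sub_1.
have p0 : p != 0 by apply: monic_neq0.
have q0 : q != 0 by apply: monic_neq0.
have sp : size p = l.+1 by rewrite size_Xn_sub_1.
have sq : size q = m.+1 by rewrite size_Xn_sub_1.
have Rp : rvp l p = - p by rewrite rvp_pm.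
have Rq : rvp m q = - q by rewrite rvp_pm.
clearbody p q.
rewrite EP EQ in E0 NZ *.
have [a [b Eg]] := structure (leqnn (size p)) p0 q0 (esym E0).
have [c0 [d0 Eh]] := structure (leqnn (size p)) p0 q0 (etrans (mulrC h g) (esym E0)).
have a0 : a != 0 by apply: contraNneq g0 => a0; rewrite Eg a0 mul0r.
have b0 : b != 0 by apply: contraNneq g0 => b0; rewrite Eg b0 map_poly0 mulr0.
have c00 : c0 != 0 by apply: contraNneq h0 => e0; rewrite Eh e0 mul0r.
have d00 : d0 != 0 by apply: contraNneq h0 => e0; rewrite Eh e0 map_poly0 mulr0.
have E2 : (a * c0)%:P * (b * d0)^:P = p%:P * q^:P :> bp.
  by rewrite !rmorphM /= E0 Eg Eh; ring.
have [lam [lam0 [Ep Eq]]] := compare (mulf_neq0 a0 c00) (mulf_neq0 b0 d00) p0 E2.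
pose c := lam^-1 *: c0; pose d := lam *: d0.
have Eac : a * c = p by rewrite /c -scalerAr Ep scalerA mulVf // scale1r.
have Ebd : b * d = q by rewrite /d -scalerAr Eq.
have Eh' : h = c%:P * d^:P.
  have H1 : ((lam^-1)%:P%:P : bp) * (lam%:P)%:P = 1.
    by rewrite -!polyCM mulVf // .
  have H2 : (c%:P : bp) = (lam^-1)%:P%:P * c0%:P by rewrite /c -mul_polyC polyCM.
  have H3 : (d^:P : bp) = (lam%:P)%:P * d0^:P.
    by rewrite /d -mul_polyC rmorphM /= map_polyC.
  rewrite H2 H3 Eh.
  transitivity (((lam^-1)%:P%:P * (lam%:P)%:P) * (c0%:P * d0^:P) : bp).
    by rewrite H1 mul1r.
  ring.
have c1 : c != 0 by rewrite scaler_eq0 invr_eq0 negb_or lam0.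
have d1 : d != 0 by rewrite scaler_eq0 negb_or lam0.
pose rv (x : {poly F}) := rvp (size x).-1 x.
have Rg : recip g = (rv a)%:P * (rv b)^:P by rewrite Eg recipE.
have Rh : recip h = (rv c)%:P * (rv d)^:P by rewrite Eh' recipE.
have rvM : forall x y : {poly F}, x != 0 -> y != 0 -> rv x * rv y = rv (x * y).
  move=> x y x0 y0; rewrite /rv.
  have -> : (size (x * y)).-1 = ((size x).-1 + (size y).-1)%N.
    rewrite size_mul //; move: (size_poly_gt0 x) (size_poly_gt0 y); rewrite x0 y0 /=.
    by move: (size x) (size y) => [|u] [|v] //= _ _; rewrite addnS.
  by rewrite rvpM // leqSpred.
have GH : recip g * recip h = p%:P * q^:P.
  rewrite Rg Rh mulrACA -rmorphM -rmorphM /= rvM // rvM // Eac Ebd /rv.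
  rewrite sp sq /= Rp Rq rmorphN /= rmorphN mulrNN //.
have Rg0 : recip g != 0.
  by apply: contraNneq M0 => e; rewrite EP EQ -GH e mul0r.
have [f [[e0 [b1 [c2 Hf]]] Hn]] := NZ.
have nzc : rv c %% p != 0.
  apply/negP => /eqP/modp_eq0P/divpK Ec; apply: Hn.
  exists (b1 + e0 * (rv c %/ p)%:P * (rv d)^:P), c2.
  rewrite subr0 EP EQ; rewrite EP EQ Rh -{1}Ec rmorphM /= in Hf.
  by rewrite -[f](subrK (e0 * ((rv c %/ p)%:P * p%:P * (rv d)^:P))) Hf; ring.
have nzd : rv d %% q != 0.
  apply/negP => /eqP/modp_eq0P/divpK Ed; apply: Hn.
  exists b1, (c2 + e0 * (rv c)%:P * (rv d %/ q)^:P).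
  rewrite subr0 EP EQ; rewrite EP EQ Rh -{1}Ed rmorphM /= in Hf.
  by rewrite -[f](subrK (e0 * ((rv c)%:P * ((rv d %/ q)^:P * q^:P)))) Hf; ring.
split.
  move=> Hsub.
  have [e [be [ga Hc]]] : inIdealR l m g (recip h).
    by apply: Hsub; exists 1, 0, 0; rewrite mul1r subrr !mul0r addr0.
  have Hc' : recip h = e * g + be * p%:P + ga * q^:P.
    by rewrite EP EQ in Hc; rewrite -[recip h](subrK (e * g)) Hc; ring.
  have dva : a %| rv c.
    apply: (key (ds := rv d) (Z := e * b^:P + be * c%:P) (ga := ga) qm nzd).
    by rewrite -Rh Hc' Eg -Eac rmorphM /=; ring.
  have dvb : b %| rv d.
    apply: (key (ds := rv c) (Z := swapXY (e * a%:P + ga * d^:P)) (ga := swapXY be) pm nzc).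
    have : recip h = b^:P * (e * a%:P + ga * d^:P) + be * p%:P.
      by rewrite Hc' Eg -Ebd rmorphM /=; ring.
    move/(congr1 swapXY); rewrite Rh !rmorphD !rmorphM /= !swapXY_polyC !swapXY_map_polyC.
    move=> E'; rewrite mulrC E' !rmorphD !rmorphM /= !swapXY_polyC !swapXY_map_polyC.
    ring.
  exists ((rv c %/ a)%:P * (rv d %/ b)^:P).
  rewrite -GH Rh Rg -{1}(divpK dva) -{1}(divpK dvb) Eg !rmorphM /=; ring.
move=> [k Hk].
have Rh2 : recip h = k * g.
  apply: (mulfI Rg0); rewrite GH Hk; ring.
move=> f1 [e He]; exists (e * k); by rewrite -mulrA -Rh2.
Qed.

End Aux.

Unset Implicit Arguments.

Theorem mainTheorem4 (F : finFieldType) (l m : nat) (g h : bipoly F) :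
  g != 0 -> h != 0 ->
  xl1 F l * ym1 F m = g * h ->
  idealR_nonzero l m g ->
  idealR_nonzero l m (recip h) ->
  (idealR_sub l m (recip h) g <-> bidvd (g * recip g) (xl1 F l * ym1 F m)).
Proof.
move=> g0 h0 E _ NZ.
exact: (main_gen g0 h0 E NZ).
Qed.
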